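(* Let $0\to A\to B\xrightarrow{g} C\to 0$ be a short exact sequence of abelian groups with $C$ torsion-free and $B/nB$ finite for every $n\in\mathbb Z_{>0}$, considered as a three-sorted structure as described below. If $X\subseteq B$ is definable, then there is $n\in\mathbb Z_{>0}$ such that $X$ is almost saturated with respect to the quotient map $B\to B/nA$.
   Context: The structure has three sorts $A$, $B$, $C$, the group language $(+,0,-)$ on $B$, the maps $A\to B$ and $g:B\to C$, arbitrary additional constants, relations and functions on $A$ and on $C$ (extending their group languages), and for each $n\in\mathbb Z_{>0}$ a predicate interpreted as $nB$. (Motivating example: $1\to k^\times\to RV\to\Gamma\to 0$ for a valued field, with field structure on $k$ and ordered group structure on $\Gamma$.) A definable set $Z\subseteq X$ is almost saturated with respect to a map $f:X\to Y$ if $f(Z)\cap f(X\setminus Z)$ is finite. *)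

(* Defs.v *)
From HB Require Import structures.
From mathcomp Require Import all_boot all_algebra.
Set Implicit Arguments. Unset Strict Implicit. Unset Printing Implicit Defensive.
Import GRing.Theory.
Local Open Scope ring_scope.

(* An arbitrary first-order language (function and relation symbols with
   arities) interpreted on a carrier T; constants are 0-ary function symbols. *)
Record lang (T : Type) := Lang {
  fsym : Type;
  farity : fsym -> nat;
  finterp : forall f : fsym, ('I_(farity f) -> T) -> T;
  rsym : Type;
  rarity : rsym -> nat;
  rinterp : forall r : rsym, ('I_(rarity r) -> T) -> Prop
}.

Section ThreeSorted.
Variables (TA TB TC : zmodType) (iota : TA -> TB) (g : TB -> TC)
          (LA : lang TA) (LC : lang TC).

Inductive termA :=
| VA of nat | ZA | AddA of termA & termA | OppA of termA
| FunA (f : fsym LA) of ('I_(farity f) -> termA).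

Inductive termB :=
| VB of nat | ZB | AddB of termB & termB | OppB of termB
| IotaB of termA.

Inductive termC :=
| VC of nat | ZC | AddC of termC & termC | OppC of termC
| FunC (f : fsym LC) of ('I_(farity f) -> termC)
| GC of termB.

Inductive formula :=
| FFalse
| FEqA of termA & termA
| FEqB of termB & termB
| FEqC of termC & termC
| FRelA (r : rsym LA) of ('I_(rarity r) -> termA)
| FRelC (r : rsym LC) of ('I_(rarity r) -> termC)
| FDivB of nat & termB   (* FDivB n t : t lies in (n+1)B *)
| FNot of formula
| FAnd of formula & formula
| FOr of formula & formula
| FImp of formula & formula
| FExA of nat & formula | FExB of nat & formula | FExC of nat & formula
| FAllA of nat & formula | FAllB of nat & formula | FAllC of nat & formula.

Definition upd (T : Type) (e : nat -> T) (n : nat) (x : T) : nat -> T :=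
  fun m => if m == n then x else e m.

Fixpoint evalA (eA : nat -> TA) (t : termA) : TA :=
  match t with
  | VA n => eA n
  | ZA => 0
  | AddA t1 t2 => evalA eA t1 + evalA eA t2
  | OppA t1 => - evalA eA t1
  | FunA f args => finterp (fun i => evalA eA (args i))
  end.

Fixpoint evalB (eA : nat -> TA) (eB : nat -> TB) (t : termB) : TB :=
  match t with
  | VB n => eB n
  | ZB => 0
  | AddB t1 t2 => evalB eA eB t1 + evalB eA eB t2
  | OppB t1 => - evalB eA eB t1
  | IotaB s => iota (evalA eA s)
  end.

Fixpoint evalC (eA : nat -> TA) (eB : nat -> TB) (eC : nat -> TC)
  (t : termC) : TC :=
  match t with
  | VC n => eC n
  | ZC => 0
  | AddC t1 t2 => evalC eA eB eC t1 + evalC eA eB eC t2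
  | OppC t1 => - evalC eA eB eC t1
  | FunC f args => finterp (fun i => evalC eA eB eC (args i))
  | GC s => g (evalB eA eB s)
  end.

Fixpoint holds (phi : formula) (eA : nat -> TA) (eB : nat -> TB)
  (eC : nat -> TC) : Prop :=
  match phi with
  | FFalse => False
  | FEqA s t => evalA eA s = evalA eA t
  | FEqB s t => evalB eA eB s = evalB eA eB t
  | FEqC s t => evalC eA eB eC s = evalC eA eB eC t
  | FRelA r args => rinterp (fun i => evalA eA (args i))
  | FRelC r args => rinterp (fun i => evalC eA eB eC (args i))
  | FDivB n t => exists b : TB, evalB eA eB t = b *+ n.+1
  | FNot p => ~ holds p eA eB eC
  | FAnd p q => holds p eA eB eC /\ holds q eA eB eC
  | FOr p q => holds p eA eB eC \/ holds q eA eB eC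
  | FImp p q => holds p eA eB eC -> holds q eA eB eC
  | FExA n p => exists a : TA, holds p (upd eA n a) eB eC
  | FExB n p => exists b : TB, holds p eA (upd eB n b) eC
  | FExC n p => exists c : TC, holds p eA eB (upd eC n c)
  | FAllA n p => forall a : TA, holds p (upd eA n a) eB eC
  | FAllB n p => forall b : TB, holds p eA (upd eB n b) eC
  | FAllC n p => forall c : TC, holds p eA eB (upd eC n c)
  end.

(* X ⊆ B is definable (with parameters): it is defined by a formula in the
   B-variable 0, the other variables being assigned fixed parameters. *)
Definition definableB (X : TB -> Prop) : Prop :=
  exists (phi : formula) (pA : nat -> TA) (pB : nat -> TB) (pC : nat -> TC),
    forall b : TB, X b <-> holds phi pA (upd pB 0 b) pC.

End ThreeSorted.

Definition finite_quot_nB (TB : zmodType) (n : nat) : Prop :=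
  exists s : seq TB, forall b : TB, exists2 c, c \in s & exists d : TB, b - c = d *+ n.

(* Z ⊆ T is almost saturated w.r.t. the quotient map by the equivalence E:
   f(Z) ∩ f(T \ Z) is finite, i.e. the E-classes meeting both Z and its
   complement are covered by finitely many classes. *)
Definition almost_saturated_rel (T : eqType) (E : T -> T -> Prop)
  (Z : T -> Prop) : Prop :=
  exists s : seq T, forall x y : T, Z x -> ~ Z y -> E x y ->
    exists2 c, c \in s & E x c.

Definition cong_nA (TA TB : zmodType) (iota : TA -> TB) (n : nat)
  (x y : TB) : Prop := exists a : TA, x - y = iota (a *+ n).

(* Main.v *)
Require Import Defs.
From HB Require Import structures.
From mathcomp Require Import all_boot all_algebra.
From mathcomp Require Import zify.
From Stdlib Require Import FunctionalExtensionality Classical.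
Set Implicit Arguments. Unset Strict Implicit. Unset Printing Implicit Defensive.
Import GRing.Theory.
Local Open Scope ring_scope.

Definition Lf (T : zmodType) (V : nat) (v : nat -> int) (e : nat -> T) : T :=
  \sum_(i < V) e i *~ v i.

Section LfLemmas.
Variables (T : zmodType) (V : nat).
Implicit Types (e : nat -> T) (v w : nat -> int).

Lemma Lf_add v w e : Lf V (fun i => v i + w i) e = Lf V v e + Lf V w e.
Proof. by rewrite /Lf -big_split /=; apply: eq_bigr => i _; rewrite mulrzDr. Qed.

Lemma Lf_opp v e : Lf V (fun i => - v i) e = - Lf V v e.
Proof. by rewrite /Lf -sumrN; apply: eq_bigr => i _; rewrite mulrNz. Qed.

Lemma Lf_sub v w e : Lf V (fun i => v i - w i) e = Lf V v e - Lf V w e.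
Proof. by rewrite Lf_add Lf_opp. Qed.

Lemma Lf_scale v (q : nat) e : Lf V (fun i => v i * q%:Z) e = Lf V v e *+ q.
Proof. by rewrite /Lf -sumrMnl; apply: eq_bigr => i _; rewrite mulrzA -pmulrn. Qed.

Lemma Lf_mulrn v e (L : nat) : Lf V v (fun i => e i *+ L) = Lf V v e *+ L.
Proof. by rewrite /Lf -sumrMnl; apply: eq_bigr => i _; rewrite !pmulrn mulrzAC. Qed.

Lemma Lf_oppe v e : Lf V v (fun i => - e i) = - Lf V v e.
Proof. by rewrite /Lf -sumrN; apply: eq_bigr => i _; rewrite mulNrz. Qed.

Lemma Lf_extv v w e : (forall i, (i < V)%N -> v i = w i) -> Lf V v e = Lf V w e.
Proof. by move=> H; apply: eq_bigr => i _; rewrite H. Qed.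

Lemma Lf_exte v e e' : (forall i, (i < V)%N -> e i = e' i) -> Lf V v e = Lf V v e'.
Proof. by move=> H; apply: eq_bigr => i _; rewrite H. Qed.

Lemma Lf_upd v e j x : (j < V)%N ->
  Lf V v (upd e j x) = Lf V (upd v j 0) e + x *~ v j.
Proof.
move=> jV; rewrite /Lf (bigD1 (Ordinal jV)) //= [X in _ = X + _](bigD1 (Ordinal jV)) //=.
rewrite /upd eqxx mulr0z add0r addrC; congr (_ + _).
apply: eq_bigr => i Hi; have -> : (i == j :> nat) = false.
  by apply/negbTE; apply: contra Hi => /eqP Hij; apply/eqP; apply: val_inj.
by [].
Qed.

End LfLemmas.

Lemma Lf_morph (T U : zmodType) (f : {additive T -> U}) V v e :
  f (Lf V v e) = Lf V v (fun i => f (e i)).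
Proof. by rewrite /Lf raddf_sum; apply: eq_bigr => i _; rewrite raddfMz. Qed.

Lemma Lf_adde (T : zmodType) V v (e e' : nat -> T) :
  Lf V v (fun i => e i + e' i) = Lf V v e + Lf V v e'.
Proof. by rewrite /Lf -big_split /=; apply: eq_bigr => i _; rewrite mulrzDl. Qed.

Lemma Lf_delta (T : zmodType) V (e : nat -> T) n : (n < V)%N ->
  Lf V (fun i => (i == n)%:Z) e = e n.
Proof.
move=> nV; rewrite /Lf (bigD1 (Ordinal nV)) //= eqxx mulr1z big1 ?addr0 //.
move=> i Hi; have -> : (i == n :> nat) = false.
  by apply/negbTE; apply: contra Hi => /eqP Hij; apply/eqP; apply: val_inj.
by rewrite mulr0z.
Qed.

Lemma Lf_zerov (T : zmodType) V (e : nat -> T) : Lf V (fun _ => 0) e = 0.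
Proof. by rewrite /Lf big1 // => i _; rewrite mulr0z. Qed.

Lemma Lf_zeroe (T : zmodType) V v (e : nat -> T) :
  (forall i, (i < V)%N -> e i = 0) -> Lf V v e = 0.
Proof. by move=> H; rewrite /Lf big1 // => i _; rewrite H ?mul0rz. Qed.

Section Main.
Variables (TA TB TC : zmodType) (iota : {additive TA -> TB}) (g : {additive TB -> TC})
  (LA : lang TA) (LC : lang TC).
Hypothesis giota : forall a, g (iota a) = 0.

Fixpoint linB (T : zmodType) (e : nat -> T) (t : termB LA) : T :=
  match t with
  | VB n => e n | ZB => 0 | AddB t1 t2 => linB e t1 + linB e t2
  | OppB t1 => - linB e t1 | IotaB _ => 0 end.

Fixpoint coefB (t : termB LA) (i : nat) : int :=
  match t with
  | VB n => (i == n)%:Z | ZB => 0 | AddB t1 t2 => coefB t1 i + coefB t2 i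
  | OppB t1 => - coefB t1 i | IotaB _ => 0 end.

Fixpoint sizeB (t : termB LA) : nat :=
  match t with
  | VB n => 1 | ZB => 0 | AddB t1 t2 => sizeB t1 + sizeB t2
  | OppB t1 => sizeB t1 | IotaB _ => 0 end.

Fixpoint varsB (V : nat) (t : termB LA) : bool :=
  match t with
  | VB n => (n < V)%N | ZB => true | AddB t1 t2 => varsB V t1 && varsB V t2
  | OppB t1 => varsB V t1 | IotaB _ => true end.

Fixpoint apartB (eA : nat -> TA) (t : termB LA) : TA :=
  match t with
  | VB n => 0 | ZB => 0 | AddB t1 t2 => apartB eA t1 + apartB eA t2
  | OppB t1 => - apartB eA t1 | IotaB s => evalA eA s end.

Lemma evalB_split eA eB t :
  evalB iota eA eB t = linB eB t + iota (apartB eA t).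
Proof.
elim: t => /= [n||t1 IH1 t2 IH2|t1 IH1|s]; rewrite ?raddf0 ?addr0 ?add0r //.
- by rewrite IH1 IH2 raddfD addrACA.
- by rewrite IH1 raddfN opprD.
Qed.

Lemma linB_Lf (T : zmodType) V (e : nat -> T) t :
  varsB V t -> linB e t = Lf V (coefB t) e.
Proof.
elim: t => /= [n||t1 IH1 t2 IH2|t1 IH1|s].
- by move=> nV; rewrite Lf_delta.
- by rewrite Lf_zerov.
- by move=> /andP[h1 h2]; rewrite Lf_add IH1 // IH2.
- by move=> h; rewrite Lf_opp IH1.
- by rewrite Lf_zerov.
Qed.

Lemma coefB_bound t i : (`|coefB t i| <= sizeB t)%N.
Proof.
elim: t => /= [n||t1 IH1 t2 IH2|t1 IH1|s] //.
- by case: (i == n).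
- lia.
- by rewrite abszN.
Qed.

Lemma evalB_shift eA eB eB' (a : nat -> TA) (M : nat) t :
  (forall i, eB' i = eB i + iota (a i *+ M)) ->
  evalB iota eA eB' t = evalB iota eA eB t + iota (linB a t *+ M).
Proof.
move=> H; elim: t => /= [n||t1 IH1 t2 IH2|t1 IH1|s];
  rewrite ?mul0rn ?raddf0 ?addr0 //.
- by rewrite IH1 IH2 mulrnDl raddfD addrACA.
- by rewrite IH1 mulNrn raddfN opprD.
Qed.

Lemma g_evalB eA eB t : g (evalB iota eA eB t) = g (linB eB t).
Proof. by rewrite evalB_split raddfD giota addr0. Qed.

Lemma evalC_shift eA eB eB' eC (a : nat -> TA) (M : nat) (t : termC LA LC) :
  (forall i, eB' i = eB i + iota (a i *+ M)) ->
  evalC iota g eA eB' eC t = evalC iota g eA eB eC t.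
Proof.
move=> H; elim: t => /= [n||t1 IH1 t2 IH2|t1 IH1|f args IH|s] //.
- by rewrite IH1 IH2.
- by rewrite IH1.
- by congr (finterp _); apply: functional_extensionality => i; rewrite IH.
- by rewrite (evalB_shift _ _ H) raddfD giota addr0.
Qed.

Definition Rel V K M (eB eB' : nat -> TB) : Prop :=
  exists a : nat -> TA, (forall i, (V <= i)%N -> a i = 0) /\
    (forall i, eB' i = eB i + iota (a i *+ M)) /\
    (forall v : nat -> int, (forall i, (i < V)%N -> (`|v i| <= K)%N) ->
       g (Lf V v eB) = 0 -> Lf V v a = 0).

Lemma g_Lf_shift V v eB (a : nat -> TA) M :
  g (Lf V v (fun i => eB i + iota (a i *+ M))) = g (Lf V v eB).
Proof.
rewrite Lf_adde raddfD [X in _ + X = _]Lf_morph.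
by rewrite (@Lf_zeroe _ _ _ (fun i => g (iota (a i *+ M)))) ?addr0 // => i _; rewrite giota.
Qed.

Lemma Rel_sym V K M eB eB' : Rel V K M eB eB' -> Rel V K M eB' eB.
Proof.
move=> [a [Ha [Hs Hc]]]; exists (fun i => - a i); split; [|split].
- by move=> i /Ha ->; rewrite oppr0.
- by move=> i; rewrite Hs mulNrn raddfN addrK.
- move=> v Hv Hg; rewrite Lf_oppe (Hc v Hv) ?oppr0 //.
  have E : Lf V v eB' = Lf V v (fun i => eB i + iota (a i *+ M)).
    by apply: Lf_exte => i _; rewrite Hs.
  by rewrite E g_Lf_shift in Hg.
Qed.

Lemma Rel_mono V K M K' M' eB eB' : Rel V K M eB eB' -> (K' <= K)%N -> (M' %| M)%N ->
  Rel V K' M' eB eB'.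
Proof.
move=> [a [Ha [Hs Hc]]] KK MM; exists (fun i => a i *+ (M %/ M')); split; [|split].
- by move=> i /Ha ->; rewrite mul0rn.
- by move=> i; rewrite Hs -mulrnA divnK.
- move=> v Hv Hg; rewrite Lf_mulrn (Hc v) ?mul0rn // => i /Hv; lia.
Qed.


Section Find.
Variables (V j K' : nat) (eB : nat -> TB) (b : TB).
Definition relv (v : nat -> int) (k : nat) :=
  v j = 0 /\ g (Lf V v eB) + g b *+ k = 0.
Definition bnd (B : nat) (v : nat -> int) := forall i, (i < V)%N -> (`|v i| <= B)%N.
Definition fK (B : nat) := (B + K' + K' * B)%N.

Lemma iter_fK_ge t B : (B <= iter t fK B)%N.
Proof. elim: t => // t IH; rewrite iterS; move: IH; set X := iter t fK B; rewrite /fK; lia. Qed.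

Lemma find t : forall B, (exists v k, relv v k /\ bnd B v /\ (0 < k <= t)%N) ->
  exists v0 k0 B', [/\ (B' <= iter t fK B)%N, relv v0 k0, bnd B' v0, (0 < k0 <= t)%N &
    forall v k, relv v k -> bnd K' v -> (0 < k)%N -> (k <= K')%N -> (k0 %| k)%N].
Proof.
elim: t => [|t IH] B [v [k [Hr [Hb Hk]]]]; first by move: Hk; lia.
have [[v' [k' [Hr' [Hb' [Hk' [Hk'K Hnd]]]]]]|Hno] := classic (exists v' k',
  relv v' k' /\ bnd K' v' /\ (0 < k')%N /\ (k' <= K')%N /\ ~~ (k %| k')%N).
- have k0 : (0 < k)%N by move: Hk; lia.
  set q := (k' %/ k)%N; set r := (k' %% k)%N.
  have rpos : (0 < r)%N by rewrite lt0n; move: Hnd; rewrite /dvdn.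
  have rk : (r < k)%N by rewrite ltn_pmod.
  have qK : (q <= K')%N by apply: leq_trans (leq_div _ _) _.
  have Ek : k' = (q * k + r)%N by apply: divn_eq.
  have [v0 [k0' [B' [HB' Hr0 Hb0 Hk0 Hdiv]]]] : exists v0 k0 B', [/\ (B' <= iter t fK (fK B))%N, relv v0 k0, bnd B' v0, (0 < k0 <= t)%N &
    forall v k, relv v k -> bnd K' v -> (0 < k)%N -> (k <= K')%N -> (k0 %| k)%N].
    apply: IH; exists (fun i => v' i - v i * q%:Z), r; split; [|split].
    + move: Hr Hr' => [Hj Hg] [Hj' Hg']; split; first by rewrite Hj Hj' mul0r subr0.
      rewrite Lf_sub Lf_scale raddfB raddfMn.
      have -> : g (Lf V v' eB) = - (g b *+ k') by apply/eqP; rewrite -addr_eq0 Hg'.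
      have -> : g (Lf V v eB) = - (g b *+ k) by apply/eqP; rewrite -addr_eq0 Hg.
        rewrite Ek mulNrn -mulrnA opprK mulnC mulrnDr. by rewrite -addrA addNr.
    + move=> i iV; have := Hb i iV; have := Hb' i iV; rewrite /fK; nia.
    + move: rk Hk; lia.
  exists v0, k0', B'; split => //; last by move: Hk0; lia.
  by rewrite iterSr.
- exists v, k, B; split => //.
  + by apply: iter_fK_ge.
  + move=> w k1 Hw Hbw Hk1 Hk1K; apply/negPn/negP => Hn; apply: Hno.
    by exists w, k1.
Qed.
End Find.

Lemma extend V K' M' eB eB' j b : (j < V)%N ->
  Rel V (iter K'.+1 (fun B => B + K' + K' * B)%N K') (M' * K'`!) eB eB' ->
  exists b', Rel V K' M' (upd eB j b) (upd eB' j b').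
Proof.
move=> jV [a [Ha [Hs Hc]]].
set L := (K'`!)%N.
have Hk0 : forall v, relv V j eB b v 0 -> bnd V K' v -> Lf V v a = 0.
  move=> v [_ Hg] Hb; apply: Hc; last by rewrite addr0 in Hg.
  move=> i /Hb; have := iter_fK_ge K' K'.+1 K'; rewrite /fK; lia.
have [y Py] : exists y : TA, forall v (k : nat), relv V j eB b v k -> bnd V K' v ->
    (k <= K')%N -> (Lf V v a) *+ L + y *+ k = 0.
  have [HA|HB] := classic (exists v k, relv V j eB b v k /\ bnd V K' v /\ (0 < k <= K')%N).
  - have [v0 [k0 [B' [HB' Hr0 Hb0 Hk0K Hdiv]]]] := @find V j K' eB b K' K' HA.
    exists (- (Lf V v0 a) *+ (L %/ k0)) => v k Hr Hb Hk.
    case: (posnP k) Hr => [->|kpos] Hr; first by rewrite (Hk0 v) ?mul0rn ?addr0.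
    have /dvdnP [q Eq] := Hdiv v k Hr Hb kpos Hk.
    have qK : (q <= K')%N by move: Hk0K Hk; rewrite Eq; nia.
    have Hu : Lf V (fun i => v i - v0 i * q%:Z) a = 0.
      apply: Hc.
      + move=> i iV; have := Hb i iV; have := Hb0 i iV.
        rewrite iterS /=; move: HB'; rewrite /fK; nia.
      + move: Hr Hr0 => [Hj Hg] [Hj0 Hg0].
        rewrite Lf_sub Lf_scale raddfB raddfMn.
        have -> : g (Lf V v eB) = - (g b *+ k) by apply/eqP; rewrite -addr_eq0 Hg.
        have -> : g (Lf V v0 eB) = - (g b *+ k0) by apply/eqP; rewrite -addr_eq0 Hg0.
        by rewrite Eq mulNrn -mulrnA mulnC subrr.
    rewrite Lf_sub Lf_scale in Hu; move/subr0_eq: Hu => ->.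
    have kL : (k0 %| L)%N by apply: dvdn_fact; move: Hk0K; lia.
    rewrite mulNrn -!mulrnA Eq.
    rewrite -mulNrn -mulrnA.
    have -> : (L %/ k0 * (q * k0))%N = (q * L)%N.
      by rewrite mulnCA divnK.
    by rewrite mulNrn addrN.
  - exists 0 => v k Hr Hb Hk; case: (posnP k) Hr => [->|kpos] Hr.
      by rewrite (Hk0 v) ?mul0rn ?addr0.
    by exfalso; apply: HB; exists v, k; split => //; split => //; lia.
exists (b + iota (y *+ M')), (upd (fun i => a i *+ L) j y); split; [|split].
- move=> i Vi; rewrite /upd; case: eqP => [Eij|_]; first by move: jV Vi; rewrite Eij; lia.
  by rewrite Ha // mul0rn.
- move=> i; rewrite /upd; case: eqP => // _.
  by rewrite Hs -mulrnA mulnC.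
- move=> w Hw Hg; rewrite Lf_upd // Lf_mulrn.
  rewrite Lf_upd // raddfD raddfMz in Hg.
  set v := upd w j 0 in Hg *.
  have vj : v j = 0 by rewrite /v /upd eqxx.
  have Hbv : bnd V K' v.
    by move=> i iV; rewrite /v /upd; case: eqP => // _; apply: Hw.
  have HwK := Hw j jV.
  case Ewj: (w j) => [k|m]; rewrite Ewj in Hg HwK.
  + rewrite -pmulrn; apply: Py => //; split => //; by rewrite -pmulrn in Hg.
  + rewrite NegzE mulrNz -pmulrn.
    have Hr : relv V j eB b (fun i => - v i) m.+1.
      split; first by rewrite vj oppr0.
      rewrite Lf_opp raddfN; rewrite NegzE mulrNz -pmulrn in Hg.
      by apply/eqP; rewrite -oppr_eq0 opprD opprK Hg.
    have Hb : bnd V K' (fun i => - v i) by move=> i iV; rewrite abszN; apply: Hbv.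
    have := Py _ _ Hr Hb HwK; rewrite Lf_opp mulNrn => H.
    by apply/eqP; rewrite -oppr_eq0 opprD opprK H.
Qed.


Fixpoint cpl (p : formula LA LC) : nat :=
  match p with
  | FEqB s t => (sizeB s + sizeB t)%N
  | FDivB n _ => n.+1
  | FNot p => cpl p
  | FAnd p q | FOr p q | FImp p q => maxn (cpl p) (cpl q)
  | FExA _ p | FExC _ p | FAllA _ p | FAllC _ p => cpl p
  | FExB _ p | FAllB _ p => (cpl p).+1
  | _ => 0%N
  end.

Fixpoint okV (V : nat) (p : formula LA LC) : Prop :=
  match p with
  | FEqB s t => varsB V s && varsB V t
  | FNot p => okV V p
  | FAnd p q | FOr p q | FImp p q => okV V p /\ okV V q
  | FExA _ p | FExC _ p | FAllA _ p | FAllC _ p => okV V p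
  | FExB n p | FAllB n p => (n < V)%N /\ okV V p
  | _ => True
  end.

End Main.

Fixpoint Kf (c : nat) : nat :=
  if c is c'.+1 then iter (Kf c').+1 (fun B => B + Kf c' + Kf c' * B)%N (Kf c') else 1%N.
Fixpoint Mf (c : nat) : nat :=
  if c is c'.+1 then (Mf c' * (Kf c')`!)%N else 1%N.

Lemma iter_ge (K t B : nat) : (B <= iter t (fun B => B + K + K * B) B)%N.
Proof. elim: t => // t IH; rewrite iterS; move: IH; set X := iter _ _ _; lia. Qed.

Lemma Kf_eq c : Kf c.+1 = iter (Kf c).+1 (fun B => B + Kf c + Kf c * B)%N (Kf c).
Proof. by []. Qed.

Lemma Kf_gt c : (c < Kf c)%N.
Proof.
elim: c => // c IH; rewrite Kf_eq iterS; have := iter_ge (Kf c) (Kf c) (Kf c).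
set X := iter _ _ _; nia.
Qed.

Lemma Kf_S c : (Kf c <= Kf c.+1)%N.
Proof. rewrite Kf_eq iterS; have := iter_ge (Kf c) (Kf c) (Kf c); set X := iter _ _ _; nia. Qed.

Lemma Kf_mono c c' : (c <= c')%N -> (Kf c <= Kf c')%N.
Proof.
move=> /subnK <-; elim: (c' - c)%N => // d IH.
by rewrite addSn; apply: leq_trans IH (Kf_S _).
Qed.

Lemma Mf_dvd c c' : (c <= c')%N -> (Mf c %| Mf c')%N.
Proof.
move=> /subnK <-; elim: (c' - c)%N => // d IH.
by rewrite addSn /=; apply: dvdn_trans IH (dvdn_mulr _ _).
Qed.

Lemma Mf_gt0 c : (0 < Mf c)%N.
Proof. by elim: c => //= c IH; rewrite muln_gt0 IH fact_gt0. Qed.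


Section Main2.
Variables (TA TB TC : zmodType) (iota : {additive TA -> TB}) (g : {additive TB -> TC})
  (LA : lang TA) (LC : lang TC).
Hypothesis giota : forall a, g (iota a) = 0.

Lemma eqB_dir V K M (s t : termB LA) eA eB eB' :
  varsB V s -> varsB V t -> (sizeB s + sizeB t <= K)%N -> Rel iota g V K M eB eB' ->
  evalB iota eA eB s = evalB iota eA eB t -> evalB iota eA eB' s = evalB iota eA eB' t.
Proof.
move=> Vs Vt HK [a [Ha [Hs Hc]]] E.
rewrite (evalB_shift eA s Hs) (evalB_shift eA t Hs) E; congr (_ + iota (_ *+ _)).
apply/eqP; rewrite -subr_eq0; apply/eqP.
rewrite (linB_Lf _ Vs) (linB_Lf _ Vt) -Lf_sub; apply: Hc.
- move=> i _; have := coefB_bound s i; have := coefB_bound t i; lia.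
- by rewrite Lf_sub raddfB -(linB_Lf _ Vs) -(linB_Lf _ Vt) -!(g_evalB giota eA) E subrr.
Qed.

Lemma divB_dir V K M n (t : termB LA) eA eB eB' :
  (n.+1 %| M)%N -> Rel iota g V K M eB eB' ->
  (exists b, evalB iota eA eB t = b *+ n.+1) -> exists b, evalB iota eA eB' t = b *+ n.+1.
Proof.
move=> /dvdnP [r ->] [a [Ha [Hs Hc]]] [b E].
exists (b + iota (linB a t *+ r)).
by rewrite (evalB_shift eA t Hs) E mulrnA raddfMn mulrnDl.
Qed.

Lemma iff_sym_dir (P : (nat -> TB) -> Prop) (R : (nat -> TB) -> (nat -> TB) -> Prop) :
  (forall x y, R x y -> R y x) -> (forall x y, R x y -> P x -> P y) ->
  forall x y, R x y -> (P x <-> P y).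
Proof. by move=> Hs Hd x y Hr; split; apply: Hd => //; apply: Hs. Qed.

Definition RelC V c := Rel iota g V (Kf c) (Mf c).

Lemma RelC_le V c c' eB eB' : (c' <= c)%N -> RelC V c eB eB' -> RelC V c' eB eB'.
Proof. by move=> cc H; apply: Rel_mono H (Kf_mono cc) (Mf_dvd cc). Qed.

Lemma RelC_sym V c eB eB' : RelC V c eB eB' -> RelC V c eB' eB.
Proof. exact: Rel_sym. Qed.

Lemma extendC V c eB eB' j b : (j < V)%N -> RelC V c.+1 eB eB' ->
  exists b', RelC V c (upd eB j b) (upd eB' j b').
Proof. move=> jV H; exact: (extend b jV H). Qed.

Lemma main (p : formula LA LC) V : okV V p -> forall eA eB eB' eC,
  RelC V (cpl p) eB eB' ->
  (holds iota g p eA eB eC <-> holds iota g p eA eB' eC).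
Proof.
elim: p => /=
  [|s t|s t|s t|r args|r args|n t|p IH|p IHp q IHq|p IHp q IHq|p IHp q IHq
   |n p IH|n p IH|n p IH|n p IH|n p IH|n p IH] OK eA eB eB' eC HR //.
- move: eB eB' HR; apply: iff_sym_dir; first by move=> ? ?; apply: RelC_sym.
  move=> x y Hr; move/andP: OK => [Vs Vt]; apply: eqB_dir Vs Vt _ Hr.
  by have := Kf_gt (sizeB s + sizeB t); lia.
- move: HR => [a [Ha [Hs Hc]]].
  by rewrite (evalC_shift giota eA eC s Hs) (evalC_shift giota eA eC t Hs).
- move: HR => [a [Ha [Hs Hc]]].
  have -> : (fun i => evalC iota g eA eB' eC (args i)) = (fun i => evalC iota g eA eB eC (args i)).
    by apply: functional_extensionality => i; rewrite (evalC_shift giota eA eC _ Hs).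
  by [].
- move: eB eB' HR; apply: iff_sym_dir; first by move=> ? ?; apply: RelC_sym.
  move=> x y Hr; apply: divB_dir Hr.
  by apply: dvdn_mull; apply: dvdn_fact; have := Kf_gt n; lia.
- by rewrite (IH OK eA eB eB' eC HR).
- case: OK => O1 O2; rewrite (IHp O1 eA eB eB' eC) ?(IHq O2 eA eB eB' eC) //;
    by apply: RelC_le HR; rewrite ?leq_maxl ?leq_maxr.
- case: OK => O1 O2; rewrite (IHp O1 eA eB eB' eC) ?(IHq O2 eA eB eB' eC) //;
    by apply: RelC_le HR; rewrite ?leq_maxl ?leq_maxr.
- case: OK => O1 O2; rewrite (IHp O1 eA eB eB' eC) ?(IHq O2 eA eB eB' eC) //;
    by apply: RelC_le HR; rewrite ?leq_maxl ?leq_maxr.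
- by split => -[x Hx]; exists x; move: Hx; rewrite (IH OK _ eB eB' eC HR).
- case: OK => nV O; split => -[x Hx].
  + have [y Hy] := extendC x nV HR; exists y; by rewrite -(IH O _ _ _ _ Hy).
  + have [y Hy] := extendC x nV (RelC_sym HR); exists y; by rewrite -(IH O _ _ _ _ Hy).
- by split => -[x Hx]; exists x; move: Hx; rewrite (IH OK _ eB eB' _ HR).
- by split => Hx x; move: (Hx x); rewrite (IH OK _ eB eB' eC HR).
- case: OK => nV O; split => Hx x.
  + have [y Hy] := extendC x nV (RelC_sym HR); rewrite (IH O _ _ _ _ Hy); exact: Hx.
  + have [y Hy] := extendC x nV HR; rewrite (IH O _ _ _ _ Hy); exact: Hx.
- by split => Hx x; move: (Hx x); rewrite (IH OK _ eB eB' _ HR).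
Qed.

End Main2.


Lemma varsB_ex (TA : zmodType) (LA : lang TA) (t : termB LA) :
  exists V, forall V', (V <= V')%N -> varsB V' t.
Proof.
elim: t => /= [n||t1 [V1 H1] t2 [V2 H2]|t1 [V1 H1]|s].
- by exists n.+1.
- by exists 0%N.
- exists (maxn V1 V2) => V' HV; rewrite H1 ?H2 //; move: HV; lia.
- by exists V1.
- by exists 0%N.
Qed.

Lemma okV_ex (TA TC : zmodType) (LA : lang TA) (LC : lang TC) (p : formula LA LC) :
  exists V, forall V', (V <= V')%N -> okV V' p.
Proof.
elim: p => /=
  [|s t|s t|s t|r args|r args|n t|p [V1 H1]|p [V1 H1] q [V2 H2]|p [V1 H1] q [V2 H2]|p [V1 H1] q [V2 H2]
   |n p [V1 H1]|n p [V1 H1]|n p [V1 H1]|n p [V1 H1]|n p [V1 H1]|n p [V1 H1]];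
  try by exists 0%N.
- have [V1 H1] := varsB_ex s; have [V2 H2] := varsB_ex t.
  exists (maxn V1 V2) => V' HV; rewrite H1 ?H2 //; move: HV; lia.
- by exists V1.
- exists (maxn V1 V2) => V' HV; split; [apply: H1|apply: H2]; move: HV; lia.
- exists (maxn V1 V2) => V' HV; split; [apply: H1|apply: H2]; move: HV; lia.
- exists (maxn V1 V2) => V' HV; split; [apply: H1|apply: H2]; move: HV; lia.
- by exists V1.
- exists (maxn V1 n.+1) => V' HV; split; [|apply: H1]; move: HV; lia.
- by exists V1.
- by exists V1.
- exists (maxn V1 n.+1) => V' HV; split; [|apply: H1]; move: HV; lia.
- by exists V1.
Qed.

Section Final.
Variables (TA TB TC : zmodType) (iota : {additive TA -> TB}) (g : {additive TB -> TC}).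
Hypothesis iota_inj : injective iota.
Hypothesis exact_mid : forall b : TB, g b = 0 <-> exists a : TA, b = iota a.
Hypothesis C_torsion_free : forall (c : TC) (n : nat), (0 < n)%N -> c *+ n = 0 -> c = 0.
Hypothesis B_fin : forall n : nat, (0 < n)%N -> finite_quot_nB TB n.
Variable n : nat.
Hypothesis n_gt0 : (0 < n)%N.

Definition cov (Z : TB -> Prop) :=
  exists s : seq TB, forall x, Z x -> exists2 c, c \in s & cong_nA iota n x c.

Lemma cov_sub (Z Z' : TB -> Prop) : cov Z' -> (forall x, Z x -> Z' x) -> cov Z.
Proof. by move=> [s Hs] H; exists s => x /H /Hs. Qed.

Lemma cov_union (Z1 Z2 : TB -> Prop) : cov Z1 -> cov Z2 -> cov (fun x => Z1 x \/ Z2 x).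
Proof.
move=> [s1 H1] [s2 H2]; exists (s1 ++ s2) => x [/H1|/H2] [c Hc E]; exists c => //;
  by rewrite mem_cat Hc ?orbT.
Qed.

Lemma cov_empty (Z : TB -> Prop) : (forall x, ~ Z x) -> cov Z.
Proof. by move=> H; exists [::] => x /H. Qed.

Lemma cov_int K (G : int -> TB -> Prop) : (forall z, cov (G z)) ->
  cov (fun x => exists z, (`|z| <= K)%N /\ G z x).
Proof.
move=> HG; elim: K => [|K IH].
- apply: (cov_sub (HG 0)) => x [z [Hz Gz]].
  have Ez : z = 0 by move: Hz; lia.
  by rewrite Ez in Gz.
- refine (cov_sub (cov_union IH (cov_union (HG (Posz K.+1)) (HG (- Posz K.+1)))) _).
  move=> x [z [Hz Gz]].
  have [Hz'|[E|E]] : (`|z| <= K)%N \/ z = Posz K.+1 \/ z = - Posz K.+1 by lia.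
  + by left; exists z.
  + by right; left; rewrite -E.
  + by right; right; rewrite -E.
Qed.

Lemma cov_vec K W (F : (nat -> int) -> TB -> Prop) : (forall v, cov (F v)) ->
  cov (fun x => exists v, (forall i, (W <= i)%N -> v i = 0) /\
     (forall i, (i < W)%N -> (`|v i| <= K)%N) /\ F v x).
Proof.
move=> HF; elim: W F HF => [|W IH] F HF.
- refine (cov_sub (HF (fun _ => 0)) _) => x [v [Hv [_ Fv]]].
  by have -> : (fun _ : nat => 0 : int) = v by apply: functional_extensionality => i; rewrite Hv.
- pose F' v x := exists z : int, (`|z| <= K)%N /\ F (upd v W z) x.
  refine (cov_sub (IH F' (fun v => @cov_int K (fun z => F (upd v W z)) (fun z => HF _))) _).
  move=> x [v [Hv [Hb Fv]]]; exists (upd v W 0); split; [|split].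
  + move=> i Wi; rewrite /upd; case: eqP => // Hne; apply: Hv; move: Wi Hne; lia.
  + move=> i iW; rewrite /upd; case: eqP => // _; apply: Hb; lia.
  + exists (v W); split; first by apply: Hb.
    have -> : upd (upd v W 0) W (v W) = v; last by [].
    by apply: functional_extensionality => i; rewrite /upd; case: eqP => // ->.
Qed.

Lemma g_iota a : g (iota a) = 0.
Proof. by apply/exact_mid; exists a. Qed.

Lemma Arep : exists sA : seq TA, forall a, exists2 a', a' \in sA & exists d, a - a' = d *+ n.
Proof.
have [sB HB] := B_fin n_gt0.
suff [sA HA] : exists sA : seq TA, forall a, (exists2 c, c \in sB & exists d, iota a - c = d *+ n) ->
   exists2 a', a' \in sA & exists d, a - a' = d *+ n.
  by exists sA => a; apply: HA; apply: HB.
elim: sB {HB} => [|c sB [sA HA]]; first by exists [::] => a [c].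
have [[a0 [d0 E0]]|Hno] := classic (exists a0 d0, iota a0 - c = d0 *+ n).
- exists (a0 :: sA) => a [c' Hc' [d Ed]].
  move: Hc'; rewrite inE => /orP[/eqP Ec|Hc'].
  + exists a0; first by rewrite inE eqxx.
    have E1 : iota (a - a0) = (d - d0) *+ n.
      by rewrite raddfB mulrnBl -Ed -E0 Ec opprB addrA subrK.
    have : g (d - d0) = 0.
      by apply: (C_torsion_free n_gt0); rewrite -raddfMn -E1 g_iota.
    move=> /exact_mid [a' Ea']; exists a'; apply: iota_inj.
    by rewrite E1 Ea' raddfMn.
  + have [a' Ha' Ea'] := HA a (ex_intro2 _ _ c' Hc' (ex_intro _ d Ed)).
    by exists a' => //; rewrite inE Ha' orbT.
- exists sA => a [c' Hc' Ed]; apply: HA; exists c' => //.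
  move: Hc'; rewrite inE => /orP[/eqP Ec|] //.
  by exfalso; apply: Hno; exists a; rewrite -Ec.
Qed.

Lemma cov_coset x0 : cov (fun x => g (x - x0) = 0).
Proof.
have [sA HA] := Arep.
exists [seq x0 + iota a' | a' <- sA] => x /exact_mid [a Ea].
have [a' Ha' [d Ed]] := HA a; exists (x0 + iota a'); first by apply: map_f.
by exists d; rewrite opprD addrA Ea -raddfB Ed.
Qed.

Lemma torsion_int (c : TC) (k : int) : c *~ k = 0 -> k != 0 -> c = 0.
Proof.
case: k => [m|m] H Hk.
- by apply: (C_torsion_free (n := m)); [move: Hk; lia | rewrite pmulrn].
- apply: (C_torsion_free (n := m.+1)) => //.
  by move: H; rewrite NegzE mulrNz -pmulrn => /eqP; rewrite oppr_eq0 => /eqP.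
Qed.


Lemma cov_fiber V (pB : nat -> TB) (v : nat -> int) : (0 < V)%N ->
  cov (fun x => v 0%N != 0 /\ g (Lf V v (upd pB 0 x)) = 0).
Proof.
move=> V0.
have [[x0 [Hv0 Hx0]]|Hno] := classic (exists x0, v 0%N != 0 /\ g (Lf V v (upd pB 0 x0)) = 0).
- refine (cov_sub (cov_coset x0) _) => x [Hv Hx].
  apply: (torsion_int (k := v 0%N)) => //.
  rewrite -raddfMz mulrzBl raddfB.
  move: Hx Hx0; rewrite !Lf_upd // !raddfD => Hx Hx0.
  apply/eqP; rewrite subr_eq0; apply/eqP.
  by apply: (@addrI _ (g (Lf V (upd v 0 0) pB))); rewrite Hx Hx0.
- by apply: cov_empty => x Hx; apply: Hno; exists x.
Qed.

End Final.

Unset Implicit Arguments.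

Theorem lemma2p36 (TA TB TC : zmodType)
  (iota : {additive TA -> TB}) (g : {additive TB -> TC})
  (LA : lang TA) (LC : lang TC)
  (iota_inj : injective iota)
  (exact_mid : forall b : TB, g b = 0 <-> exists a : TA, b = iota a)
  (g_surj : forall c : TC, exists b : TB, g b = c)
  (C_torsion_free : forall (c : TC) (n : nat), (0 < n)%N -> c *+ n = 0 -> c = 0)
  (B_fin : forall n : nat, (0 < n)%N -> finite_quot_nB TB n)
  (X : TB -> Prop)
  (X_def : definableB iota g LA LC X) :
  exists2 n : nat, (0 < n)%N &
    almost_saturated_rel (cong_nA iota n) X.
Proof.
have giota : forall a, g (iota a) = 0 by move=> a; apply/exact_mid; exists a.
move: X_def => [phi [pA [pB [pC HX]]]].
have [V0 HV0] := okV_ex phi.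
set V := maxn V0 1.
have OK : okV V phi by apply: HV0; rewrite leq_maxl.
have Vpos : (0 < V)%N by rewrite leq_maxr.
set c := cpl phi; set n := Mf c; set K := Kf c.
have npos : (0 < n)%N by apply: Mf_gt0.
exists n => //.
pose Exc x := exists v : nat -> int, (forall i, (V <= i)%N -> v i = 0) /\
     (forall i, (i < V)%N -> (`|v i| <= K)%N) /\
     (v 0%N != 0 /\ g (Lf V v (upd pB 0 x)) = 0).
have [s Hs] : cov iota n Exc.
  apply: (@cov_vec _ _ iota n npos K V (fun v x => v 0%N != 0 /\ g (Lf V v (upd pB 0 x)) = 0)) => v.
  exact: (@cov_fiber _ _ _ iota g iota_inj exact_mid C_torsion_free B_fin n npos V pB v Vpos).


exists s => x y Xx nXy Exy; apply: Hs.
apply: NNPP => nExc.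
have HR : RelC iota g V c (upd pB 0 x) (upd pB 0 y); last first.
  by apply: nXy; apply/HX; rewrite -(main giota OK pA pC HR); apply/HX.
move: Exy => [a0 Ea0].
exists (upd (fun _ => 0) 0 (- a0)); split; [|split].
- move=> i Vi; rewrite /upd; case: eqP => // Ei; move: Vi Vpos; rewrite Ei; lia.
- move=> i; rewrite /upd; case: eqP => _.
  + by rewrite mulNrn raddfN -Ea0 opprB addrC subrK.
  + by rewrite mul0rn raddf0 addr0.
- move=> v Hv Hg; rewrite Lf_upd // Lf_zeroe // add0r.
  have [E0|Hne] := eqVneq (v 0%N) 0; first by rewrite E0 mulr0z.
  exfalso; apply: nExc; exists (fun i => if (i < V)%N then v i else 0); split; [|split].
  + by move=> i Vi; rewrite ltnNge Vi.
  + by move=> i iV; rewrite iV; apply: Hv.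
  + by rewrite Vpos; split => //; rewrite -Hg; congr (g _); apply: Lf_extv => i ->.
Qed.
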